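(* Assume the center manifold expansion hypothesis (H$_C$). Then for all $N>0$, $r>0$, $\sigma>0$ and every $i\ge -1$, $$c_i(\sigma N,\sigma^{\nu-1}r)=\frac{1}{\sigma}\,c_i(N,r).$$
   Context: Fix an integer $\nu\ge2$. For $N>0$ and $r>0$ let $w_{N,r}(\lambda)=\exp\!\big[-N\big(\tfrac{\lambda^2}{2}+\tfrac{r\lambda^{2\nu}}{2\nu}\big)\big]$ on $\mathbb R$. Let $\{\pi_n\}$ be the associated monic orthogonal polynomials, with recurrence $\lambda\pi_n=\pi_{n+1}+b_n^2\pi_{n-1}$ and $b_n^2>0$. Write $x_{n,N,r}:=b_n^2$. Hypothesis (H$_C$), the center manifold expansion: for every $N,r>0$ there are real numbers $c_i(N,r)$, $i\ge-1$, such that for every integer $m\ge-1$ there exist $K_{2,m}(N,r)>0$ and $n_1$ with $$\Big|x_{n,N,r}-\sum_{i=-1}^m c_i(N,r)\,n^{-i/\nu}\Big|<\frac{K_{2,m}(N,r)}{n^{(m+1)/\nu}}\quad\text{for all } n\ge n_1.$$ The coefficients $c_i(N,r)$ are then uniquely determined. *)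

(* Defs.v *)
From HB Require Import structures.
From mathcomp Require Import all_boot all_order all_algebra.
From mathcomp Require Import all_classical all_reals all_analysis.
Set Implicit Arguments. Unset Strict Implicit. Unset Printing Implicit Defensive.
Import Order.TTheory GRing.Theory Num.Theory.
Local Open Scope ring_scope.

Definition weight {R : realType} (nu : nat) (N r : R) (l : R) : R :=
  expR (- (N * (l ^+ 2 / 2 + r * l ^+ (2 * nu) / (2 * nu)%:R))).

Definition wip {R : realType} (nu : nat) (N r : R) (p q : {poly R}) : \bar R :=
  (\int[@lebesgue_measure R]_(l in [set: R]) (p.[l] * q.[l] * weight nu N r l)%:E)%E.

Definition monic_OP_family {R : realType} (nu : nat) (N r : R)
    (pi : nat -> {poly R}) : Prop :=
  forall n, [/\ pi n \is monic, size (pi n) = n.+1 &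
                forall m, (m < n)%N -> wip nu N r (pi n) (pi m) = 0%E].

(* The recurrence λ π_n = π_{n+1} + b_n^2 π_{n-1}  (with π_{-1} = 0),
   where b2 n = b_n^2 = x_{n,N,r}. *)
Definition OP_recurrence {R : realType} (pi : nat -> {poly R}) (b2 : nat -> R) : Prop :=
  'X * pi 0%N = pi 1%N /\
  forall n, (0 < n)%N -> 'X * pi n = pi n.+1 + b2 n *: pi n.-1.

(* Partial sum  Σ_{i=-1}^{m} c_i n^{-i/ν}, with m = m' - 1 for m' : nat
   (so m' ranges over m+1 >= 0). Index i = k - 1 for k < m'+1. *)
Definition cm_partial {R : realType} (nu : nat) (c : int -> R) (m' n : nat) : R :=
  \sum_(k < m'.+1) c (k%:Z - 1) * (n%:R) `^ (- ((k%:Z - 1)%:~R / nu%:R)).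

Definition center_manifold_expansion {R : realType} (nu : nat)
    (x : nat -> R) (c : int -> R) : Prop :=
  forall m' : nat, exists2 K : R, 0 < K &
    exists n1 : nat, forall n : nat, (n1 <= n)%N ->
      `| x n - cm_partial nu c m' n | < K / (n%:R) `^ (m'%:R / nu%:R).

(* Main.v *)
Require Import Defs.
From HB Require Import structures.
From mathcomp Require Import all_boot all_order all_algebra.
From mathcomp Require Import all_classical all_reals all_analysis.
From mathcomp Require Import measurable_realfun.
From mathcomp Require Import ring lra zify.
Import Order.TTheory GRing.Theory Num.Theory.
Import numFieldNormedType.Exports.
Local Open Scope classical_set_scope.
Local Open Scope ring_scope.

Section All.
Variable R : realType.
Notation mu := (@lebesgue_measure R).


Lemma powR_unbounded (nu : nat) (B : R) : (0 < nu)%N ->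
  exists m : nat, forall n : nat, (m <= n)%N -> B < n%:R `^ (nu%:R^-1).
Proof.
move=> hnu.
exists ((Num.truncn `|B|).+1 ^ nu)%N => n hn.
have h1 : B < (Num.truncn `|B|).+1%:R.
  by apply: (le_lt_trans (ler_norm B)); rewrite truncnS_gt.
apply: (lt_le_trans h1).
have -> : ((Num.truncn `|B|).+1%:R : R) = ((Num.truncn `|B|).+1 ^ nu)%:R `^ (nu%:R^-1).
  rewrite natrX -powR_mulrn // -powRrM mulfV ?powRr1 // pnatr_eq0 -lt0n //.
apply: ge0_ler_powR => //; rewrite ?invr_ge0 ?ler_nat ?nnegrE //.
Qed.

Lemma cme_unique (nu : nat) (y : nat -> R) (a b : int -> R) : (0 < nu)%N ->
  center_manifold_expansion nu y a -> center_manifold_expansion nu y b ->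
  forall k : nat, a (k%:Z - 1) = b (k%:Z - 1).
Proof.
move=> hnu ha hb k; move: k; apply: ltn_ind => k IH.
have [Ka Ka0 [na Hna]] := ha k.
have [Kb Kb0 [nb Hnb]] := hb k.
apply/eqP; rewrite -subr_eq0; apply: contraT => hd.
set d := a (k%:Z - 1) - b (k%:Z - 1).
have dpos : 0 < `|d| by rewrite normr_gt0.
have [m Hm] := @powR_unbounded nu ((Ka + Kb) / `|d|) hnu.
pose n := maxn (maxn na nb) (maxn m 1).
have hna : (na <= n)%N by rewrite /n !leq_max leqnn.
have hnb : (nb <= n)%N by rewrite /n !leq_max leqnn orbT.
have hnm : (m <= n)%N by rewrite /n !leq_max leqnn !orbT.
have hn1 : (1 <= n)%N by rewrite /n !leq_max leqnn !orbT.
have n0 : (0 : R) < n%:R by rewrite ltr0n.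
have := Hna n hna; have := Hnb n hnb.
have Hdiff : cm_partial nu a k n - cm_partial nu b k n =
   d * n%:R `^ (- ((k%:Z - 1)%:~R / nu%:R)).
  rewrite /cm_partial !big_ord_recr /=.
  rewrite (eq_bigr (fun i : 'I_k => b (i%:Z - 1) * n%:R `^ (- ((i%:Z - 1)%:~R / nu%:R)))); last first.
    by move=> i _; rewrite IH.
  by rewrite /d; lra.
set P := n%:R `^ (k%:R / nu%:R).
have P0 : 0 < P by rewrite powR_gt0.
move=> h2 h1.
have h3 : `|d| * n%:R `^ (- ((k%:Z - 1)%:~R / nu%:R)) < (Ka + Kb) / P.
  rewrite -(@ger0_norm _ (n%:R `^ _)) ?powR_ge0 // -normrM -Hdiff mulrDl.
  apply: (le_lt_trans _ (ltrD h1 h2)).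
  have -> : cm_partial nu a k n - cm_partial nu b k n =
    (y n - cm_partial nu b k n) - (y n - cm_partial nu a k n) by ring.
  apply: (le_trans (ler_normB _ _)); by rewrite addrC.
have e : n%:R `^ (- ((k%:Z - 1)%:~R / nu%:R)) * P = n%:R `^ (nu%:R^-1).
  rewrite /P -powRD; last by rewrite pnatr_eq0 -lt0n hn1 implybT.
  congr (_ `^ _); rewrite intrD /= mulrC; field.
  by rewrite pnatr_eq0 -lt0n.
have h4 : `|d| * n%:R `^ (nu%:R^-1) < Ka + Kb.
  by rewrite -e mulrA -ltr_pdivlMr.
have := Hm n hnm.
rewrite ltr_pdivrMr // mulrC => h5.
by move: (lt_trans h4 h5); rewrite ltxx.
Qed.


Lemma subst_ge0 (g : R -> R) (s : R) : 0 < s -> continuous g -> (forall x, 0 <= g x) ->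
  (\int[mu]_x (g x)%:E = \int[mu]_x (g (s * x) * s)%:E)%E.
Proof.
move=> s0 cg g0.
pose F := fun x : R => s * x.
have F'E : (F^`())%classic = cst s.
  apply/funext => x; rewrite /F derive1E deriveM// derive_cst scaler0.
  by rewrite addr0 derive_id scaler1.
rewrite (@increasing_ge0_integration_by_substitutionT _ F g) //.
- by apply: eq_integral => x _; rewrite F'E.
- by move=> x y xy; rewrite /F ltr_pM2l.
- by rewrite F'E => ?; exact: cvg_cst.
- by rewrite F'E; exact: is_cvg_cst.
- by rewrite F'E; exact: is_cvg_cst.
- rewrite /F; under eq_fun do rewrite mulrC.
  exact: gt0_cvgMlNy.
- rewrite /F; under eq_fun do rewrite mulrC.
  exact: gt0_cvgMly.
Qed.

Lemma contmax0 (f : R -> R) : continuous f -> continuous (fun x => Num.max (f x) 0).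
Proof.
move=> cf x.
apply: (continuous_max (cf x)); exact: cvg_cst.
Qed.

Lemma subst_scale (f : R -> R) (s : R) : 0 < s -> continuous f ->
  (\int[mu]_x (f x)%:E = \int[mu]_x (f (s * x) * s)%:E)%E.
Proof.
move=> s0 cf.
rewrite integralE [in RHS]integralE.
congr (_ - _)%E.
- transitivity (\int[mu]_x (Num.max (f x) 0)%:E)%E.
    by apply: eq_integral => x _; rewrite funeposE EFin_max.
  rewrite (@subst_ge0 _ s) //; last by move=> x; rewrite le_max lexx orbT.
    apply: eq_integral => x _; rewrite funeposE -EFin_max maxr_pMl ?mul0r //.
    exact: ltW.
  exact: contmax0.
- transitivity (\int[mu]_x (Num.max (- f x) 0)%:E)%E.
    by apply: eq_integral => x _; rewrite funenegE EFin_max.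
  rewrite (@subst_ge0 _ s) //; last by move=> x; rewrite le_max lexx orbT.
    apply: eq_integral => x _; rewrite funenegE -EFin_max maxr_pMl ?mul0r ?mulNr //.
    exact: ltW.
  apply: contmax0 => x; apply: continuousN; exact: cf.
Qed.

Implicit Types (N r l : R) (nu : nat) (p q : {poly R}).


Lemma poly_bound (p : {poly R}) (l : R) :
  `|p.[l]| <= (\sum_(i < size p) `|p`_i|) * (1 + l ^+ 2) ^+ size p.
Proof.
rewrite horner_coef big_distrl /=.
apply: (le_trans (ler_norm_sum _ _ _)); apply: ler_sum => i _.
rewrite normrM ler_wpM2l // normrX.
have h1 : 1 <= 1 + l ^+ 2 by rewrite lerDl sqr_ge0.
have h2 : `|l| <= 1 + l ^+ 2.
  rewrite -[l ^+ 2]real_normK ?num_real //.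
  have := sqr_ge0 (`|l| - 2^-1); lra.
apply: (le_trans (lerXn2r _ _ _ h2)); rewrite ?nnegrE ?normr_ge0 ?(le_trans ler01) //.
exact: (ler_weXn2l h1 (ltnW (ltn_ord i))).
Qed.

Lemma pow_exp_bound (a : R) (d : nat) (l : R) : 0 < a -> a <= 1 ->
  (1 + l ^+ 2) ^+ d <= a ^- d * expR (d%:R * a * l ^+ 2).
Proof.
move=> a0 a1.
rewrite -mulrA expRM_natl -exprVn -exprMn.
have H : 1 + l ^+ 2 <= a^-1 * expR (a * l ^+ 2).
  apply: (@le_trans _ _ (a^-1 * (1 + a * l ^+ 2))).
    rewrite mulrDr mulrA mulVf ?gt_eqF // mul1r mulr1 lerD2r invf_ge1 //.
  by rewrite ler_pM2l ?invr_gt0 // expR_ge1Dx.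
apply: (lerXn2r d _ _ H); rewrite nnegrE.
  by rewrite addr_ge0 ?sqr_ge0.
by rewrite mulr_ge0 ?invr_ge0 ?expR_ge0 ?ltW.
Qed.

Definition wpoly (nu : nat) (N r : R) : {poly R} :=
  - (N%:P * ('X^2 * (2^-1)%:P + r%:P * 'X^(2 * nu) * (((2 * nu)%:R)^-1)%:P)).

Lemma weightE nu N r : weight nu N r = expR \o horner (wpoly nu N r).
Proof.
by apply/funext => l /=; rewrite /weight /wpoly !hornerE.
Qed.

Lemma weight_cont nu N r : continuous (weight nu N r).
Proof.
rewrite weightE => x; apply: continuous_comp; [exact: continuous_horner | exact: continuous_expR].
Qed.

Lemma weight_gt0 nu N r l : 0 < weight nu N r l.
Proof. exact: expR_gt0. Qed.

Lemma weight_le nu N r l : 0 <= N -> 0 <= r ->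
  weight nu N r l <= expR (- (N * l ^+ 2 / 2)).
Proof.
move=> N0 r0; rewrite /weight ler_expR lerN2 -mulrA ler_wpM2l // lerDl.
by rewrite mulr_ge0 ?invr_ge0 // mulr_ge0 // exprM exprn_ge0 // sqr_ge0.
Qed.

Lemma cont_pw (p : {poly R}) nu N r : continuous (fun l => p.[l] * weight nu N r l).
Proof.
move=> x; apply: cvgM; [exact: continuous_horner | exact: weight_cont].
Qed.

Lemma pw_bound (p : {poly R}) nu N r : 0 < N -> 0 <= r ->
  exists C : R, 0 <= C /\ forall l,
    `|p.[l] * weight nu N r l| <= C * expR (- (N / 4 * l ^+ 2)).
Proof.
move=> N0 r0.
set A := \sum_(i < size p) `|p`_i|.
set d := size p.
pose a := N / ((4 * d.+1)%:R * (1 + N)).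
have den0 : 0 < (4 * d.+1)%:R * (1 + N) by rewrite mulr_gt0 // ?ltr0n // addr_gt0.
have a0 : 0 < a by rewrite divr_gt0.
have a1 : a <= 1.
  rewrite ler_pdivrMr // mul1r; apply: (@le_trans _ _ (1 + N)); first lra.
  rewrite ler_peMl ?addr_ge0 ?ltW // ltr1n; lia.
have da : d%:R * a <= N / 4.
  have e : d.+1%:R = d%:R + 1 :> R by rewrite -natr1.
  rewrite /a mulrA ler_pdivrMr // natrM e.
  have hd : 0 <= d%:R :> R by [].
  have -> : N / 4 * (4 * (d%:R + 1) * (1 + N)) = N * (d%:R + 1) * (1 + N) by field.
  have : 0 <= N * N * d%:R by rewrite !mulr_ge0 // ltW.
  have : 0 <= N * N by rewrite mulr_ge0 // ltW.
  nra.
have A0 : 0 <= A by rewrite sumr_ge0.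
exists (A * a ^- d); split; first by rewrite mulr_ge0 // invr_ge0 exprn_ge0 // ltW.
move=> l.
rewrite normrM (ger0_norm (ltW (weight_gt0 _ _ _ _))).
apply: (le_trans (ler_wpM2r (ltW (weight_gt0 _ _ _ _)) (poly_bound p l))).
rewrite -/A -/d -!mulrA; apply: ler_wpM2l => //.
apply: (le_trans (ler_wpM2r (ltW (weight_gt0 _ _ _ _)) (@pow_exp_bound a d l a0 a1))).
rewrite -[_ * weight _ _ _ _]mulrA; apply: ler_wpM2l; first by rewrite invr_ge0 exprn_ge0 // ltW.
apply: (le_trans (y := expR (d%:R * a * l ^+ 2) * expR (- (N * l ^+ 2 / 2)))).
  by apply: ler_wpM2l; [exact: expR_ge0 | exact: weight_le (ltW N0) r0].
rewrite -expRD ler_expR.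
have h : d%:R * a * l ^+ 2 <= N / 4 * l ^+ 2 by apply: ler_wpM2r => //; exact: sqr_ge0.
have e1 : N * l ^+ 2 / 2 = 2 * (N / 4 * l ^+ 2) by field.
have e2 : N * (4^-1 * l ^+ 2) = N / 4 * l ^+ 2 by field.
rewrite e1 e2.
have : 0 <= N / 4 * l ^+ 2 by rewrite mulr_ge0 ?sqr_ge0 // divr_ge0 // ltW.
lra.
Qed.

Lemma integrable_gauss (c : R) : 0 < c ->
  mu.-integrable [set: R] (fun x => (expR (- (c * x ^+ 2)))%:E).
Proof.
move=> c0.
pose s := Num.sqrt (2^-1 / c).
have s0 : s != 0 by rewrite /s gt_eqF // sqrtr_gt0 divr_gt0.
have hs : s ^+ 2 *+ 2 = c^-1.
  rewrite /s sqr_sqrtr ?divr_ge0 ?ltW // -mulr_natr; field; by rewrite gt_eqF.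
have := integrableZl measurableT (normal_peak s)^-1 (@integrable_normal_pdf R 0 s).
apply: eq_integrable => // x _.
rewrite normal_pdfE // /normal_fun /= -EFinM mulrA mulVf ?gt_eqF ?normal_peak_gt0 //.
rewrite mul1r hs subr0 invrK; congr (expR _)%:E; rewrite mulNr mulrC //.
Qed.

Lemma integrable_pw (p : {poly R}) nu N r : 0 < N -> 0 <= r ->
  mu.-integrable [set: R] (fun l => (p.[l] * weight nu N r l)%:E).
Proof.
move=> N0 r0.
have [C [C0 HC]] := pw_bound p nu N r N0 r0.
have Hg : mu.-integrable [set: R] (fun x => (C%:E * (expR (- (N / 4 * x ^+ 2)))%:E)%E).
  apply: integrableZl => //; apply: integrable_gauss; exact: divr_gt0.
apply: (le_integrable measurableT _ _ Hg).
- apply/measurable_EFinP; apply: continuous_measurable_fun; exact: cont_pw.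
- move=> x _; rewrite -EFinM !abse_EFin lee_fin.
  apply: (le_trans (HC x)); exact: ler_norm.
Qed.


Definition ip nu N r p q : R := fine (wip nu N r p q).

Lemma wip_int nu N r p q : 0 < N -> 0 <= r ->
  mu.-integrable [set: R] (fun l => (p.[l] * q.[l] * weight nu N r l)%:E).
Proof.
move=> N0 r0; have := integrable_pw (p * q) nu N r N0 r0.
by apply: eq_integrable => // x _; rewrite hornerM.
Qed.

Lemma wipE nu N r p q : 0 < N -> 0 <= r -> wip nu N r p q = (ip nu N r p q)%:E.
Proof.
move=> N0 r0; rewrite /ip fineK //; exact: integrable_fin_num (wip_int nu N r p q N0 r0).
Qed.

Lemma ipD nu N r p1 p2 q : 0 < N -> 0 <= r ->
  ip nu N r (p1 + p2) q = ip nu N r p1 q + ip nu N r p2 q.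
Proof.
move=> N0 r0; apply/eqP; rewrite -eqe EFinD -!wipE //.
rewrite /wip -integralD //; try exact: wip_int.
by apply/eqP; apply: eq_integral => x _; rewrite hornerD !mulrDl EFinD.
Qed.

Lemma ipZ nu N r a p q : 0 < N -> 0 <= r ->
  ip nu N r (a *: p) q = a * ip nu N r p q.
Proof.
move=> N0 r0; apply/eqP; rewrite -eqe EFinM -!wipE //.
rewrite /wip -integralZl //; last exact: wip_int.
by apply/eqP; apply: eq_integral => x _; rewrite hornerZ -!mulrA EFinM.
Qed.

Lemma ipC nu N r p q : ip nu N r p q = ip nu N r q p.
Proof.
by rewrite /ip /wip; congr fine; apply: eq_integral => x _; rewrite (mulrC p.[x]).
Qed.

Lemma ip0 nu N r q : 0 < N -> 0 <= r -> ip nu N r 0 q = 0.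
Proof.
move=> N0 r0; have := ipZ nu N r 0 0 q N0 r0.
by rewrite scale0r mul0r.
Qed.

Lemma ipB nu N r p1 p2 q : 0 < N -> 0 <= r ->
  ip nu N r (p1 - p2) q = ip nu N r p1 q - ip nu N r p2 q.
Proof.
move=> N0 r0; rewrite ipD // -scaleN1r ipZ //; ring.
Qed.

Lemma poly_nonroot p : p != 0 -> exists x0, p.[x0] != 0.
Proof.
move=> pn0.
have [x0 hx0] : exists x0, ~ (p.[x0] = 0).
  apply/existsNP => H.
  suff : (size p < size p)%N by rewrite ltnn.
  have := @max_poly_roots _ p [seq i%:R | i <- iota 0 (size p)] pn0.
  rewrite size_map size_iota; apply.
    by apply/allP => y _; rewrite /root H.
  rewrite map_inj_uniq ?iota_uniq // => i j /eqP; rewrite eqr_nat => /eqP //.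
by exists x0; apply/eqP.
Qed.

Lemma ip_pos nu N r p : 0 < N -> 0 <= r -> p != 0 -> 0 < ip nu N r p p.
Proof.
move=> N0 r0 pn0; rewrite -lte_fin -wipE // /wip.
set g := fun x => p.[x] * p.[x] * weight nu N r x.
have cg : continuous g.
  move=> x; apply: cvgM; last exact: weight_cont.
  by apply: cvgM; exact: continuous_horner.
have g0 : forall x, 0 <= g x.
  by move=> x; rewrite /g mulr_ge0 ?(ltW (weight_gt0 _ _ _ _)) // -expr2 sqr_ge0.
have [x0 hx0] := poly_nonroot p pn0.
have gx0 : 0 < g x0.
  by rewrite /g mulr_gt0 ?weight_gt0 // -expr2 exprn_even_gt0.
pose c := g x0 / 2.
have c0 : 0 < c by rewrite divr_gt0.
have := cg x0; move/cvgrPdist_lt => /(_ c c0) /nbhs_ballP [e /= e0 He].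
pose I := `]x0 - e, x0 + e[.
have hI : forall y, [set` I] y -> c <= g y.
  move=> y; rewrite /= in_itv /= => /andP[h1 h2].
  have : ball x0 e y.
    rewrite -ball_normE /ball_ /=.
    rewrite ltr_norml; apply/andP; split; lra.
  move/He => /= h.
  have := ler_norm (g x0 - g y).
  move: h; rewrite /c; lra.
have mg : measurable_fun [set: R] (fun x => (g x)%:E).
  by apply/measurable_EFinP; exact: continuous_measurable_fun.
apply: (@lt_le_trans _ _ (\int[mu]_(x in [set` I]) (g x)%:E)%E); last first.
  apply: ge0_subset_integral => //.
  by move=> x _; rewrite lee_fin.
apply: (@lt_le_trans _ _ (\int[mu]_(x in [set` I]) (cst c%:E x))%E); last first.
  apply: ge0_le_integral => //.
  - by move=> x _; rewrite lee_fin ltW.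
  - exact: measurable_funTS.
rewrite integral_cst // -[X in (_ * X)%E]/(lebesgue_measure [set` I]) /I lebesgue_measure_itv /= lte_fin.
have -> : (x0 - e < x0 + e)%R by lra.
by rewrite -EFinD -EFinM lte_fin mulr_gt0 //; lra.
Qed.

Lemma orth_low nu N r (pi : nat -> {poly R}) n : 0 < N -> 0 <= r ->
  monic_OP_family nu N r pi ->
  forall q, (size q <= n)%N -> ip nu N r (pi n) q = 0.
Proof.
move=> N0 r0 hpi.
suff H : forall k, (k <= n)%N -> forall q, (size q <= k)%N -> ip nu N r (pi n) q = 0.
  by move=> q hq; exact: H hq.
elim=> [|k IH] hk q hq.
  move: hq; rewrite leqn0 size_poly_eq0 => /eqP ->.
  by rewrite ipC ip0.
have [mk sk _] := hpi k.
pose q' := q - q`_k *: pi k.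
have hq' : (size q' <= k)%N.
  apply/leq_sizeP => j hj; rewrite /q' coefB coefZ.
  case: (ltngtP k j) hj => [kj|//|<-] _.
  + have h1 : q`_j = 0 by rewrite nth_default // (leq_trans hq).
    have h2 : (pi k)`_j = 0 by rewrite nth_default // sk.
    by rewrite h1 h2 mulr0 subr0.
  + by have := monicP mk; rewrite lead_coefE sk /= => ->; rewrite mulr1 subrr.
have -> : q = q' + q`_k *: pi k by rewrite /q' subrK.
rewrite ipC ipD // ipZ // [ip _ _ _ q' _]ipC IH ?(ltnW hk) // [ip _ _ _ (pi k) _]ipC.
have [_ _ ho] := hpi n.
by rewrite /ip ho // mulr0 addr0.
Qed.

Lemma OP_unique nu N r (pi pi' : nat -> {poly R}) : 0 < N -> 0 <= r ->
  monic_OP_family nu N r pi -> monic_OP_family nu N r pi' ->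
  forall n, pi n = pi' n.
Proof.
move=> N0 r0 hpi hpi' n.
have [m1 s1 _] := hpi n.
have [m2 s2 _] := hpi' n.
pose d := pi n - pi' n.
have hd : (size d <= n)%N.
  apply/leq_sizeP => j hj; rewrite /d coefB.
  case: (ltngtP n j) hj => [nj|//|<-] _.
  + have h1 : (pi n)`_j = 0 by rewrite nth_default // s1.
    have h2 : (pi' n)`_j = 0 by rewrite nth_default // s2.
    by rewrite h1 h2 subr0.
  + have := monicP m1; rewrite lead_coefE s1 /= => ->.
    by have := monicP m2; rewrite lead_coefE s2 /= => ->; rewrite subrr.
apply/eqP; rewrite -subr_eq0 -/d; apply: contraT => dn0.
have := ip_pos nu N r d N0 r0 dn0.
rewrite {1}/d ipB // (@orth_low nu N r pi n N0 r0 hpi d hd).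
by rewrite (@orth_low nu N r pi' n N0 r0 hpi' d hd) subrr ltxx.
Qed.

Lemma weight_scale nu N r (sg y : R) : (0 < nu)%N -> 0 < sg ->
  weight nu N r (Num.sqrt sg * y) = weight nu (sg * N) (sg ^+ nu.-1 * r) y.
Proof.
move=> hnu sg0; rewrite /weight; congr (expR (- _)).
rewrite !exprMn sqr_sqrtr ?ltW // exprM sqr_sqrtr ?ltW //.
have e : sg ^+ nu = sg * sg ^+ nu.-1 by rewrite -exprS prednK.
rewrite e.
have h : ((2 * nu)%:R : R) != 0 by rewrite pnatr_eq0 muln_eq0 negb_or /= -lt0n.
ring.
Qed.

Lemma scaled_family nu N r sg (pi' : nat -> {poly R}) :
  (0 < nu)%N -> 0 < N -> 0 < r -> 0 < sg ->
  monic_OP_family nu (sg * N) (sg ^+ nu.-1 * r) pi' ->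
  monic_OP_family nu N r
    (fun n => (Num.sqrt sg) ^+ n *: (pi' n \Po ((Num.sqrt sg)^-1 *: 'X))).
Proof.
move=> hnu N0 r0 sg0 hpi' n.
set s := Num.sqrt sg.
have s0 : 0 < s by rewrite sqrtr_gt0.
have sn0 : s != 0 by rewrite gt_eqF.
have sT : size (s^-1 *: 'X : {poly R}) = 2 by rewrite size_scale ?invr_eq0 // size_polyX.
have [m' sz' ho'] := hpi' n.
split.
- rewrite monicE lead_coefZ lead_coef_comp ?sT // (monicP m') mul1r.
  by rewrite lead_coefZ lead_coefX mulr1 sz' /= -exprMn mulfV // expr1n.
- by rewrite size_scale ?expf_neq0 // size_comp_poly2.
- move=> m mn.
  rewrite /wip (@subst_scale _ s) //; last first.
    move=> x; apply: cvgM; last exact: weight_cont.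
    by apply: cvgM; exact: continuous_horner.
  have N'0 : 0 < sg * N by rewrite mulr_gt0.
  have r'0 : 0 <= sg ^+ nu.-1 * r by rewrite mulr_ge0 ?exprn_ge0 ?ltW.
  transitivity (\int[mu]_x ((s ^+ (n + m + 1))%:E *
     ((pi' n).[x] * (pi' m).[x] * weight nu (sg * N) (sg ^+ nu.-1 * r) x)%:E))%E.
    apply: eq_integral => x _.
    rewrite !hornerZ !horner_comp !hornerZ hornerX !mulKf //.
    rewrite /s weight_scale // -EFinM; congr EFin.
    rewrite !exprD expr1; ring.
  rewrite integralZl //; last exact: wip_int.
  by have := ho' m mn; rewrite /wip => ->; rewrite mule0.
Qed.
End All.

Theorem lemmaB1 (R : realType) (nu : nat) (hnu : (2 <= nu)%N)
    (pi : R -> R -> nat -> {poly R}) (x : R -> R -> nat -> R)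
    (c : R -> R -> int -> R)
    (hpi : forall N r : R, 0 < N -> 0 < r -> monic_OP_family nu N r (pi N r))
    (hx : forall N r : R, 0 < N -> 0 < r -> OP_recurrence (pi N r) (x N r))
    (hHC : forall N r : R, 0 < N -> 0 < r ->
             center_manifold_expansion nu (x N r) (c N r)) :
  forall (N r sigma : R), 0 < N -> 0 < r -> 0 < sigma ->
  forall i : int, (-1 <= i)%R ->
    c (sigma * N) (sigma ^+ nu.-1 * r) i = c N r i / sigma.
Proof.
move=> N r sg N0 r0 sg0 i hi.
have hnu0 : (0 < nu)%N by apply: leq_trans hnu.
set N' := sg * N; set r' := sg ^+ nu.-1 * r.
have N'0 : 0 < N' by rewrite mulr_gt0.
have r'0 : 0 < r' by rewrite mulr_gt0 ?exprn_gt0.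
set s := Num.sqrt sg.
have s0 : 0 < s by rewrite sqrtr_gt0.
have sn0 : s != 0 by rewrite gt_eqF.
have ss : s ^+ 2 = sg by rewrite sqr_sqrtr ?ltW.
pose T : {poly R} := s^-1 *: 'X.
pose q n := s ^+ n *: (pi N' r' n \Po T).
have hq : monic_OP_family nu N r q := @scaled_family R nu N r sg (pi N' r') hnu0 N0 r0 sg0 (hpi N' r' N'0 r'0).
have E : forall n, pi N r n = q n := @OP_unique R nu N r (pi N r) q N0 (ltW r0) (hpi N r N0 r0) hq.
have Xs : forall n, (0 < n)%N -> x N r n = sg * x N' r' n.
  move=> n n0.
  have [_ h1] := hx N r N0 r0; have [_ h2] := hx N' r' N'0 r'0.
  have e1 := h1 n n0; have e2 := h2 n n0.
  rewrite !E in e1.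
  have key : 'X * q n = q n.+1 + (sg * x N' r' n) *: q n.-1.
    have hX : ('X : {poly R}) = s *: T by rewrite /T scalerA mulfV // scale1r.
    rewrite /q {1}hX -scalerAl -scalerAr.
    have -> : T * (pi N' r' n \Po T) = ('X * pi N' r' n) \Po T by rewrite comp_polyM comp_polyX.
    rewrite e2 comp_polyD comp_polyZ scalerDr !scalerA.
    rewrite scalerDr !scalerA.
    congr (_ + _); first by rewrite -exprS.
    congr (_ *: _); rewrite -ss -{1}(prednK n0) !exprS; ring.
  have : (x N r n - sg * x N' r' n) *: q n.-1 = 0.
    rewrite scalerBl; apply/eqP; rewrite subr_eq0; apply/eqP.
    by apply: (addrI (q n.+1)); rewrite -e1 -key.
  move/eqP; rewrite scaler_eq0 => /orP[|].
    by rewrite subr_eq0 => /eqP.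
  by have [mq _ _] := hq n.-1; rewrite (negbTE (monic_neq0 mq)).
have hcs : center_manifold_expansion nu (x N' r') (fun j => c N r j / sg).
  move=> m'; have [K K0 [n1 Hn]] := hHC N r N0 r0 m'.
  exists (K / sg); first by rewrite divr_gt0.
  exists (maxn n1 1) => n hn.
  have hn1 : (n1 <= n)%N by apply: leq_trans hn; rewrite leq_maxl.
  have hn0 : (0 < n)%N by apply: leq_trans hn; rewrite leq_maxr.
  have ex : x N' r' n = x N r n / sg by rewrite Xs // [sg * _]mulrC mulfK // gt_eqF.
  have ecp : cm_partial nu (fun j => c N r j / sg) m' n = cm_partial nu (c N r) m' n / sg.
    by rewrite /cm_partial big_distrl /=; apply: eq_bigr => k _; rewrite mulrAC.
  rewrite ex ecp -mulrBl normrM [`|sg^-1|]gtr0_norm ?invr_gt0 // [X in _ < X]mulrAC.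
  by rewrite ltr_pM2r ?invr_gt0 //; exact: Hn.
have U := @cme_unique R nu (x N' r') _ _ hnu0 (hHC N' r' N'0 r'0) hcs.
have [k ->] : exists k : nat, i = k%:Z - 1.
  exists (absz (i + 1)); rewrite gez0_abs; first by rewrite addrK.
  by rewrite -lerBlDr sub0r.
exact: U.
Qed.
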